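(* For every integer $k>0$ there exists a monotonic transition function $\varphi$ with $\varphi(0)=0$ and $\varphi'(0)>0$ such that the function $$I(x)=4\int_x^{L(x)}\varphi(s)\big(\varphi'(s)\big)^2\,ds,\qquad x\in(0,1),$$ where $L(x)\in(-1,0)$ is defined by $\varphi(L(x))=-\varphi(x)$, has at least $k$ simple zeros in $(0,1)$.
   Context: A transition function is a $C^\infty$ function $\varphi:\mathbb{R}\to\mathbb{R}$ with $\varphi(t)=-1$ for $t\le-1$, $\varphi(t)=1$ for $t\ge1$; monotonic means $\varphi'(t)>0$ on $(-1,1)$. *)

(* Defs.v *)
From Stdlib Require Import Reals List.
From Coquelicot Require Import Coquelicot.
Open Scope R_scope.

Definition smooth (f : R -> R) : Prop := forall (n : nat) (x : R), ex_derive_n f n x.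

Definition transition_function (phi : R -> R) : Prop :=
  smooth phi /\ (forall t, t <= -1 -> phi t = -1) /\ (forall t, 1 <= t -> phi t = 1).

Definition monotonic_transition (phi : R -> R) : Prop :=
  transition_function phi /\ (forall t, -1 < t < 1 -> 0 < Derive phi t).

Definition is_L (phi L : R -> R) : Prop :=
  forall x, 0 < x < 1 -> -1 < L x < 0 /\ phi (L x) = - phi x.

Definition I_fun (phi L : R -> R) (x : R) : R :=
  4 * RInt (fun s => phi s * (Derive phi s) ^ 2) x (L x).

Definition simple_zero (f : R -> R) (x0 : R) : Prop :=
  f x0 = 0 /\ ex_derive f x0 /\ Derive f x0 <> 0.

(* Main.v *)
Require Import Defs.
From Stdlib Require Import Reals List Lra Lia Arith FunctionalExtensionality.
From Coquelicot Require Import Coquelicot.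
Open Scope R_scope.

Fixpoint Cn (n : nat) (f : R -> R) : Prop :=
  match n with
  | O => True
  | S n => (forall x, ex_derive f x) /\ Cn n (Derive f)
  end.

Lemma Cn_ext n f g : (forall x, f x = g x) -> Cn n f -> Cn n g.
Proof. intros H; replace g with f; auto. now apply functional_extensionality. Qed.

Lemma Cn_weak n : forall f, Cn (S n) f -> Cn n f.
Proof.
  induction n; simpl; intros f H; auto.
  destruct H as [H1 H2]. split; auto.
Qed.

Lemma Cn_ex n f : Cn (S n) f -> forall x, ex_derive (Derive_n f n) x.
Proof.
  revert f; induction n; intros f H x.
  - simpl in H. apply H.
  - destruct H as [H1 H2].
    replace (Derive_n f (S n)) with (Derive_n (Derive f) n).
    + now apply IHn.
    + apply functional_extensionality; intros y.
      transitivity (Derive_n (Derive_n f 1) n y). reflexivity.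
      rewrite Derive_n_comp. replace (n+1)%nat with (S n) by lia.
      reflexivity.
Qed.

Lemma Cn_smooth f : (forall n, Cn n f) -> smooth f.
Proof.
  intros H n x. destruct n; simpl; auto. now apply (Cn_ex n f (H (S n))).
Qed.

Lemma Cn_const n : forall c, Cn n (fun _ => c).
Proof.
  induction n; simpl; auto. intros c; split.
  - intros; apply ex_derive_const.
  - apply (Cn_ext n (fun _ => 0)); auto. intros; now rewrite Derive_const.
Qed.

Lemma Cn_id n : Cn n (fun x => x).
Proof.
  destruct n; simpl; auto. split.
  - intros; apply ex_derive_id.
  - apply (Cn_ext n (fun _ => 1)). intros; now rewrite <- (Derive_id x).
    apply Cn_const.
Qed.

Lemma Cn_plus n : forall f g, Cn n f -> Cn n g -> Cn n (fun x => f x + g x).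
Proof.
  induction n; simpl; auto. intros f g [F1 F2] [G1 G2]; split.
  - intros; now apply (ex_derive_plus f g).
  - apply (Cn_ext n (fun x => Derive f x + Derive g x)).
    intros; now rewrite Derive_plus. now apply IHn.
Qed.

Lemma Cn_mult n : forall f g, Cn n f -> Cn n g -> Cn n (fun x => f x * g x).
Proof.
  induction n; simpl; auto. intros f g [F1 F2] [G1 G2]; split.
  - intros; apply ex_derive_mult; auto.
  - apply (Cn_ext n (fun x => Derive f x * g x + f x * Derive g x)).
    intros; now rewrite Derive_mult.
    apply Cn_plus; apply IHn; auto.
    apply Cn_weak; simpl; auto.
    apply Cn_weak; simpl; auto.
Qed.

Lemma Cn_comp n : forall f g, Cn n f -> Cn n g -> Cn n (fun x => f (g x)).
Proof.
  induction n; simpl; auto. intros f g [F1 F2] [G1 G2]; split.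
  - intros; apply (ex_derive_comp f g); auto.
  - apply (Cn_ext n (fun x => Derive g x * Derive f (g x))).
    intros; symmetry; apply Derive_comp; auto.
    apply Cn_mult; auto. apply IHn; auto.
    apply Cn_weak; simpl; auto.
Qed.

Lemma Cn_inv n : forall g, (forall x, g x <> 0) -> Cn n g -> Cn n (fun x => / g x).
Proof.
  induction n; simpl; auto. intros g Hg [G1 G2]; split.
  - intros; apply ex_derive_inv; auto.
  - apply (Cn_ext n (fun x => (-1) * Derive g x * (/ g x * / g x))).
    intros; rewrite Derive_inv; auto. field; auto.
    apply Cn_mult. apply Cn_mult; auto. apply Cn_const.
    apply Cn_mult; apply IHn; auto; apply Cn_weak; simpl; auto.
Qed.

Fixpoint ev (l : list R) (u : R) : R :=
  match l with nil => 0 | a :: l => a + u * ev l u end.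
Fixpoint padd (p q : list R) : list R :=
  match p, q with
  | nil, q => q
  | p, nil => p
  | a :: p, b :: q => (a + b) :: padd p q end.
Definition pscal (c : R) (p : list R) := map (fun a => c * a) p.
Fixpoint pder (p : list R) : list R :=
  match p with nil => nil | a :: p => padd p (0 :: pder p) end.

Lemma isd_const (c x : R) : is_derive (fun _ => c) x 0.
Proof. auto_derive; auto. Qed.

Lemma isd_id (x : R) : is_derive (fun t => t) x 1.
Proof. auto_derive; auto. Qed.
Lemma isd_plus f g (x df dg : R) : is_derive f x df -> is_derive g x dg ->
  is_derive (fun t => f t + g t) x (df + dg).
Proof. intros; now apply (is_derive_plus f g). Qed.
Lemma isd_mult f g (x df dg : R) : is_derive f x df -> is_derive g x dg ->
  is_derive (fun t => f t * g t) x (df * g x + f x * dg).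
Proof. intros; apply (is_derive_mult f g); auto. intros; apply Rmult_comm. Qed.
Lemma isd_comp f g (x df dg : R) : is_derive f (g x) df -> is_derive g x dg ->
  is_derive (fun t => f (g t)) x (dg * df).
Proof. intros; now apply (is_derive_comp f g). Qed.
Lemma isd_opp f (x df : R) : is_derive f x df -> is_derive (fun t => - f t) x (- df).
Proof. intros; now apply (is_derive_opp f). Qed.
Lemma isd_val f (x d d' : R) : is_derive f x d -> d = d' -> is_derive f x d'.
Proof. intros; subst; auto. Qed.

Lemma ev_padd p : forall q u, ev (padd p q) u = ev p u + ev q u.
Proof.
  induction p as [|a p IH]; intros q u; simpl. lra.
  destruct q as [|b q]; simpl. lra. rewrite IH. ring.
Qed.
Lemma ev_pscal c p u : ev (pscal c p) u = c * ev p u.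
Proof. induction p as [|a p IH]; simpl. ring. rewrite IH; ring. Qed.

Lemma ev_der p (u : R) : is_derive (ev p) u (ev (pder p) u).
Proof.
  induction p as [|a p IH]; simpl.
  - apply (is_derive_ext (fun _ => 0)). reflexivity. apply isd_const.
  - rewrite ev_padd. simpl.
    apply (is_derive_ext (fun u => a + u * ev p u)). reflexivity.
    eapply isd_val. apply isd_plus. apply isd_const.
    apply isd_mult. apply isd_id. apply IH. simpl; lra.
Qed.

Definition Ndl (l : list R) := 0 :: 0 :: padd l (pscal (-1) (pder l)).

Definition Pe (l : list R) (t : R) : R :=
  if Rlt_dec 0 t then ev l (/ t) * exp (- / t) else 0.

Fixpoint Sabs (l : list R) : R := match l with nil => 0 | a :: l => Rabs a + Sabs l end.

Lemma Sabs_ge0 l : 0 <= Sabs l.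
Proof. induction l; simpl. lra. pose proof (Rabs_pos a); lra. Qed.

Lemma ev_bound l u : 1 <= u -> Rabs (ev l u) <= Sabs l * u ^ length l.
Proof.
  intros Hu; induction l as [|a l IH]; simpl. rewrite Rabs_R0; lra.
  assert (1 <= u ^ length l) by (apply pow_R1_Rle; lra).
  pose proof (Sabs_ge0 l).
  eapply Rle_trans. apply Rabs_triang. rewrite Rabs_mult, (Rabs_right u) by lra.
  assert (Rabs a <= Rabs a * (u * u ^ length l)).
  { pose proof (Rabs_pos a). assert (1 <= u * u ^ length l) by nra. nra. }
  nra.
Qed.

Lemma sum_pos_last f m : (forall n, 0 <= f n) -> f m <= sum_f_R0 f m.
Proof.
  intros H. destruct m; simpl. lra.
  pose proof (cond_pos_sum f m H). lra.
Qed.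

Lemma exp_ge_pow m u : 0 <= u -> u ^ m / INR (Factorial.fact m) <= exp u.
Proof.
  intros Hu. eapply Rle_trans; [|apply (exp_ge_taylor u m Hu)].
  apply (sum_pos_last (fun k => u ^ k / INR (Factorial.fact k))).
  intros n. apply Rmult_le_pos. now apply pow_le.
  apply Rlt_le, Rinv_0_lt_compat, lt_0_INR, Factorial.lt_O_fact.
Qed.

Lemma Pe_derive_pos l t : 0 < t -> is_derive (Pe l) t (Pe (Ndl l) t).
Proof.
  intros Ht.
  apply (is_derive_ext_loc (fun t => ev l (/ t) * exp (- / t))).
  { exists (mkposreal t Ht). intros y Hy. unfold Pe.
    destruct (Rlt_dec 0 y) as [_|n]; auto. exfalso; apply n.
    unfold ball in Hy; simpl in Hy; unfold AbsRing_ball, abs, minus, plus, opp in Hy; simpl in Hy.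
    apply Rabs_def2 in Hy. lra. }
  unfold Pe. destruct (Rlt_dec 0 t) as [_|nn]; [|lra].
  assert (Hi : is_derive (fun t => / t) t (- / t ^ 2)).
  { auto_derive. lra. field. lra. }
  eapply isd_val. apply isd_mult.
  apply (isd_comp (ev l) (fun t => / t)). apply ev_der. exact Hi.
  apply (isd_comp exp (fun t => - / t)). apply is_derive_exp.
  apply isd_opp. exact Hi.
  unfold Ndl. simpl. rewrite ev_padd, ev_pscal. field. lra.
Qed.

Lemma Pe_derive l t : is_derive (Pe l) t (Pe (Ndl l) t).
Proof.
  destruct (Rlt_dec 0 t) as [Ht|Ht]. now apply Pe_derive_pos.
  destruct (Rlt_dec t 0) as [Hn|Hn].
  - apply (is_derive_ext_loc (fun _ => 0)).
    { exists (mkposreal (-t) ltac:(simpl; lra)). intros y Hy. unfold Pe.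
      destruct (Rlt_dec 0 y) as [Y|_]; auto. exfalso.
      unfold ball in Hy; simpl in Hy; unfold AbsRing_ball, abs, minus, plus, opp in Hy; simpl in Hy.
      apply Rabs_def2 in Hy. lra. }
    unfold Pe. destruct (Rlt_dec 0 t); [lra|]. apply isd_const.
  - assert (t = 0) by lra. subst t.
    unfold Pe at 2. destruct (Rlt_dec 0 0) as [?|n0]; [lra|]. clear n0.
    apply is_derive_Reals. intros eps Heps.
    set (n := length l). set (C := Sabs l * INR (Factorial.fact (S (S n)))).
    assert (HC : 0 <= C). { apply Rmult_le_pos. apply Sabs_ge0. apply pos_INR. }
    assert (Hd : 0 < Rmin 1 (eps / (C + 1))).
    { apply Rmin_pos. lra. apply Rdiv_lt_0_compat; lra. }
    exists (mkposreal _ Hd). intros h Hh0 Hh. simpl in Hh.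
    unfold Pe. rewrite Rplus_0_l. destruct (Rlt_dec 0 0) as [?|n0]; [lra|]. clear n0.
    destruct (Rlt_dec 0 h) as [Hp|Hp].
    + rewrite Rabs_right in Hh by lra.
      assert (h1 : h < 1) by (eapply Rlt_le_trans; [apply Hh|apply Rmin_l]).
      assert (h2 : h < eps / (C+1)) by (eapply Rlt_le_trans; [apply Hh|apply Rmin_r]).
      set (u := / h).
      assert (Hu : 1 <= u). { unfold u. rewrite <- Rinv_1. apply Rinv_le_contravar; lra. }
      assert (Hb := ev_bound l u Hu).
      assert (He := exp_ge_pow (S (S n)) u ltac:(lra)).
      assert (Hf : 0 < INR (Factorial.fact (S (S n)))) by apply lt_0_INR, Factorial.lt_O_fact.
      assert (Hun : 0 < u ^ n) by (apply pow_lt; lra).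
      assert (Hex : 0 < exp u) by apply exp_pos.
      replace ((ev l u * exp (- u) - 0) / h - 0) with (ev l u * u / exp u).
      2:{ unfold u. rewrite exp_Ropp. field. split. apply Rgt_not_eq, exp_pos. lra. }
      assert (Rabs (ev l u * u / exp u) = Rabs (ev l u) * u * / exp u) as ->.
      { unfold Rdiv. rewrite !Rabs_mult, Rabs_inv, (Rabs_right u), (Rabs_right (exp u)); lra. }
      (* |ev| * u / exp u <= S u^n u * (S+2)! / u^(n+2) = C / u = C h *)
      assert (Hstep : Rabs (ev l u) * u * / exp u <= C * h).
      { apply (Rmult_le_reg_r (exp u)); auto.
        rewrite Rmult_assoc, Rinv_l, Rmult_1_r by lra.
        assert (Hx : exp u * INR (Factorial.fact (S (S n))) >= u ^ S (S n)).
        { apply Rle_ge. apply (Rmult_le_reg_r (/ INR (Factorial.fact (S (S n))))).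
          apply Rinv_0_lt_compat; lra. rewrite Rmult_assoc, Rinv_r, Rmult_1_r by lra. exact He. }
        assert (Hh' : h * u = 1) by (unfold u; field; lra).
        change (u ^ S (S n)) with (u * (u * u ^ n)) in Hx. unfold C.
        pose proof (Sabs_ge0 l).
        assert (Hy : Rabs (ev l u) * u <= Sabs l * u ^ n * u) by (apply Rmult_le_compat_r; [lra|exact Hb]).
        assert (Hz : Sabs l * u ^ n * u * (h * u) <= Sabs l * INR (Factorial.fact (S (S n))) * h * exp u).
        { replace (Sabs l * u ^ n * u * (h * u)) with (h * Sabs l * (u * (u * u ^ n))) by ring.
          replace (Sabs l * INR (Factorial.fact (S (S n))) * h * exp u) with (h * Sabs l * (exp u * INR (Factorial.fact (S (S n))))) by ring.
          apply Rmult_le_compat_l. apply Rmult_le_pos; lra. lra. }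
        rewrite Hh', Rmult_1_r in Hz. lra. }
      assert (C * h < eps).
      { apply (Rle_lt_trans _ ((C+1) * h)). nra.
        apply (Rmult_lt_compat_l (C+1)) in h2; [|lra].
        replace ((C+1) * (eps / (C+1))) with eps in h2 by (field; lra). lra. }
      lra.
    + replace ((0 - 0) / h - 0) with 0 by (field; auto). rewrite Rabs_R0. lra.
Qed.

Lemma Pe_Derive l : Derive (Pe l) = Pe (Ndl l).
Proof. apply functional_extensionality; intros t. apply is_derive_unique, Pe_derive. Qed.

Lemma Pe_Cn n : forall l, Cn n (Pe l).
Proof.
  induction n; simpl; auto. intros l; split.
  - intros x. eexists. apply Pe_derive.
  - rewrite Pe_Derive. apply IHn.
Qed.

Definition E := Pe (1 :: nil).
Definition E1 := Pe (Ndl (1 :: nil)).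

Lemma E_pos t : 0 < t -> E t = exp (- / t).
Proof. intros; unfold E, Pe. destruct (Rlt_dec 0 t); [simpl; ring|lra]. Qed.
Lemma E_zero t : t <= 0 -> E t = 0.
Proof. intros; unfold E, Pe. destruct (Rlt_dec 0 t); [lra|auto]. Qed.
Lemma E1_pos t : 0 < t -> E1 t = (/ t) ^ 2 * exp (- / t).
Proof. intros; unfold E1, Pe. destruct (Rlt_dec 0 t); [|lra]. simpl. ring. Qed.
Lemma E1_zero t : t <= 0 -> E1 t = 0.
Proof. intros; unfold E1, Pe. destruct (Rlt_dec 0 t); [lra|auto]. Qed.
Lemma E_ge0 t : 0 <= E t.
Proof. destruct (Rlt_dec 0 t). rewrite E_pos by lra. apply Rlt_le, exp_pos. rewrite E_zero; lra. Qed.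
Lemma E_gt0 t : 0 < t -> 0 < E t.
Proof. intros; rewrite E_pos by lra. apply exp_pos. Qed.
Lemma E1_ge0 t : 0 <= E1 t.
Proof. destruct (Rlt_dec 0 t). rewrite E1_pos by lra. apply Rmult_le_pos. apply pow2_ge_0. apply Rlt_le, exp_pos. rewrite E1_zero; lra. Qed.
Lemma E1_gt0 t : 0 < t -> 0 < E1 t.
Proof. intros; rewrite E1_pos by lra. apply Rmult_lt_0_compat. apply pow_lt, Rinv_0_lt_compat; lra. apply exp_pos. Qed.
Lemma E_der t : is_derive E t (E1 t).
Proof. apply Pe_derive. Qed.
Lemma E_Cn n : Cn n E.
Proof. apply Pe_Cn. Qed.

Definition Den t := E t + E (1 - t).
Lemma Den_pos t : 0 < Den t.
Proof.
  unfold Den. destruct (Rlt_dec 0 t).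
  pose proof (E_gt0 t r); pose proof (E_ge0 (1-t)); lra.
  pose proof (E_gt0 (1-t) ltac:(lra)); pose proof (E_ge0 t); lra.
Qed.

Definition psi t := E t * / Den t.
Definition dpsi t := (E1 t * E (1 - t) + E t * E1 (1 - t)) / (Den t) ^ 2.

Lemma Cn_lin n a b : Cn n (fun t => a + b * t).
Proof. apply Cn_plus. apply Cn_const. apply Cn_mult. apply Cn_const. apply Cn_id. Qed.

Lemma psi_Cn n : Cn n psi.
Proof.
  apply Cn_mult. apply E_Cn. apply Cn_inv. intros; apply Rgt_not_eq, Den_pos.
  apply Cn_plus. apply E_Cn.
  apply (Cn_ext n (fun t => E (1 + (-1) * t))). intros; f_equal; ring.
  apply Cn_comp. apply E_Cn. apply Cn_lin.
Qed.

Lemma isd_inv f (x df : R) : is_derive f x df -> f x <> 0 ->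
  is_derive (fun t => / f t) x (- df / f x ^ 2).
Proof. intros; now apply is_derive_inv. Qed.

Lemma Den_der t : is_derive Den t (E1 t - E1 (1 - t)).
Proof.
  unfold Den. eapply isd_val. apply isd_plus. apply E_der.
  apply (isd_comp E (fun t => 1 - t)). apply E_der. auto_derive; auto.
  ring.
Qed.

Lemma psi_der t : is_derive psi t (dpsi t).
Proof.
  unfold psi. eapply isd_val. apply isd_mult. apply E_der.
  apply isd_inv. apply Den_der. apply Rgt_not_eq, Den_pos.
  unfold dpsi. pose proof (Den_pos t). unfold Den in *. field. lra.
Qed.

Lemma Derive_psi : Derive psi = dpsi.
Proof. apply functional_extensionality; intros; apply is_derive_unique, psi_der. Qed.

Lemma psi_zero t : t <= 0 -> psi t = 0.
Proof. intros; unfold psi; rewrite E_zero; lra. Qed.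
Lemma psi_one t : 1 <= t -> psi t = 1.
Proof.
  intros; unfold psi, Den. rewrite (E_zero (1 - t)) by lra.
  pose proof (E_gt0 t ltac:(lra)). field. lra.
Qed.
Lemma psi_sym t : psi (1 - t) = 1 - psi t.
Proof.
  unfold psi. pose proof (Den_pos t). unfold Den in *.
  replace (1 - (1 - t)) with t by ring. field. lra.
Qed.
Lemma dpsi_ge0 t : 0 <= dpsi t.
Proof.
  unfold dpsi. pose proof (Den_pos t).
  pose proof (E_ge0 t); pose proof (E_ge0 (1-t)); pose proof (E1_ge0 t); pose proof (E1_ge0 (1-t)).
  apply Rmult_le_pos. nra. apply Rlt_le, Rinv_0_lt_compat, pow_lt; lra.
Qed.
Lemma dpsi_pos t : 0 < t < 1 -> 0 < dpsi t.
Proof.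
  intros Ht. unfold dpsi. pose proof (Den_pos t).
  pose proof (E_gt0 t ltac:(lra)); pose proof (E_gt0 (1-t) ltac:(lra)).
  pose proof (E1_gt0 t ltac:(lra)); pose proof (E1_gt0 (1-t) ltac:(lra)).
  apply Rmult_lt_0_compat. nra. apply Rinv_0_lt_compat, pow_lt; lra.
Qed.
Lemma dpsi_out t : (t <= 0 \/ 1 <= t) -> dpsi t = 0.
Proof.
  intros [H|H]; unfold dpsi.
  rewrite (E_zero t), (E1_zero t) by lra. unfold Rdiv; ring.
  rewrite (E_zero (1-t)), (E1_zero (1-t)) by lra. unfold Rdiv; ring.
Qed.
Lemma dpsi_sym t : dpsi (1 - t) = dpsi t.
Proof.
  unfold dpsi, Den. replace (1 - (1 - t)) with t by ring. f_equal. ring. f_equal. ring.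
Qed.
Lemma psi_le1 t : psi t <= 1.
Proof.
  unfold psi. pose proof (Den_pos t). pose proof (E_ge0 (1-t)). unfold Den in *.
  apply (Rmult_le_reg_r (E t + E (1 - t))); auto.
  rewrite Rmult_assoc, Rinv_l, Rmult_1_r, Rmult_1_l by lra. lra.
Qed.

Lemma Cn1_cont f : Cn 1 f -> forall x, continuity_pt f x.
Proof.
  intros [H _] x. apply continuity_pt_filterlim. apply (ex_derive_continuous (K:=R_AbsRing) (V:=R_NormedModule)). apply H.
Qed.

Lemma dpsi_cont x : continuity_pt dpsi x.
Proof.
  rewrite <- Derive_psi. apply Cn1_cont. apply (psi_Cn 2).
Qed.

Definition phi0 t := 2 * psi ((t + 1) / 2) - 1.
Definition dphi0 t := dpsi ((t + 1) / 2).

Lemma phi0_der (t : R) : is_derive phi0 t (dphi0 t).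
Proof.
  unfold phi0, dphi0. eapply isd_val.
  apply isd_plus. apply isd_mult. apply isd_const.
  apply (isd_comp psi (fun t => (t + 1) / 2)). apply psi_der. auto_derive; auto.
  apply isd_const. simpl; field.
Qed.
Lemma phi0_Cn n : Cn n phi0.
Proof.
  unfold phi0. apply Cn_plus. apply Cn_mult. apply Cn_const.
  apply (Cn_ext n (fun t => psi (1/2 + 1/2 * t))). intros; f_equal; field.
  apply Cn_comp. apply psi_Cn. apply Cn_lin. apply Cn_const.
Qed.
Lemma phi0_odd t : phi0 (- t) = - phi0 t.
Proof.
  unfold phi0. replace ((- t + 1) / 2) with (1 - (t + 1) / 2) by field.
  rewrite psi_sym. ring.
Qed.
Lemma dphi0_even t : dphi0 (- t) = dphi0 t.
Proof.
  unfold dphi0. replace ((- t + 1) / 2) with (1 - (t + 1) / 2) by field.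
  apply dpsi_sym.
Qed.
Lemma dphi0_pos t : -1 < t < 1 -> 0 < dphi0 t.
Proof. intros; unfold dphi0; apply dpsi_pos; lra. Qed.
Lemma phi0_m1 t : t <= -1 -> phi0 t = -1.
Proof. intros; unfold phi0; rewrite psi_zero by lra; ring. Qed.
Lemma phi0_p1 t : 1 <= t -> phi0 t = 1.
Proof. intros; unfold phi0; rewrite psi_one by lra; ring. Qed.
Lemma phi0_0 : phi0 0 = 0.
Proof. pose proof (phi0_odd 0). replace (-0) with 0 in H by ring. lra. Qed.

Lemma isd_cont f (x d : R) : is_derive f x d -> continuity_pt f x.
Proof.
  intros H. apply continuity_pt_filterlim.
  apply (ex_derive_continuous (K:=R_AbsRing) (V:=R_NormedModule)). eexists; eauto.
Qed.

Lemma mono_le f df a b : a <= b -> (forall x, is_derive f x (df x)) ->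
  (forall x, a <= x <= b -> 0 <= df x) -> f a <= f b.
Proof.
  intros Hab Hd Hp.
  destruct (MVT_gen f a b df) as [c [Hc Heq]].
  - intros; apply Hd.
  - intros; eapply isd_cont; apply Hd.
  - rewrite Rmin_left, Rmax_right in Hc by lra.
    assert (0 <= df c * (b - a)) by (apply Rmult_le_pos; [apply Hp; lra|lra]). lra.
Qed.

Lemma mono_lt f df a b : a < b -> (forall x, is_derive f x (df x)) ->
  (forall x, a <= x <= b -> 0 <= df x) -> (forall x, a < x < b -> 0 < df x) -> f a < f b.
Proof.
  intros Hab Hd Hp Hs.
  set (a' := a + (b - a) / 3). set (b' := b - (b - a) / 3).
  assert (f a <= f a') by (apply (mono_le f df); unfold a'; auto; try lra; intros; apply Hp; lra).
  assert (f b' <= f b) by (apply (mono_le f df); unfold b'; auto; try lra; intros; apply Hp; unfold b' in *; lra).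
  destruct (MVT_gen f a' b' df) as [c [Hc Heq]].
  - intros; apply Hd.
  - intros; eapply isd_cont; apply Hd.
  - rewrite Rmin_left, Rmax_right in Hc by (unfold a', b'; lra).
    assert (0 < df c * (b' - a')) by (apply Rmult_lt_0_compat; [apply Hs; unfold a', b' in *; lra|unfold a', b'; lra]). lra.
Qed.

Section Dummy. End Dummy.

Fixpoint sumc (K : R) (n : nat) : R :=
  match n with O => 0 | S n => sumc K n + (- K) ^ n end.
Fixpoint sumac (K : R) (n : nat) : R :=
  match n with O => 0 | S n => sumac K n + Rabs ((- K) ^ n) end.
Fixpoint etaS (N K : R) (n : nat) (x : R) : R :=
  match n with O => 0 | S n => etaS N K n x + (- K) ^ n * psi (N * x - INR n - 1) end.
Fixpoint detaS (N K : R) (n : nat) (x : R) : R :=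
  match n with O => 0 | S n => detaS N K n x + (- K) ^ n * (N * dpsi (N * x - INR n - 1)) end.

Lemma etaS_der N K n (x : R) : is_derive (etaS N K n) x (detaS N K n x).
Proof.
  induction n; simpl.
  - apply isd_const.
  - apply isd_plus. auto. eapply isd_val. apply isd_mult. apply isd_const.
    apply (isd_comp psi (fun x => N * x - INR n - 1)). apply psi_der.
    auto_derive; auto. simpl; ring.
Qed.

Lemma etaS_Cn N K n m : Cn m (etaS N K n).
Proof.
  induction n; simpl. apply Cn_const.
  apply Cn_plus; auto. apply Cn_mult. apply Cn_const.
  apply (Cn_ext m (fun x => psi ((- INR n - 1) + N * x))). intros; f_equal; ring.
  apply Cn_comp. apply psi_Cn. apply Cn_lin.
Qed.

Lemma etaS_low N K n x : N * x <= 1 -> etaS N K n x = 0.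
Proof.
  intros H; induction n; simpl; auto. rewrite IHn, psi_zero. ring.
  pose proof (pos_INR n); lra.
Qed.
Lemma detaS_low N K n x : N * x <= 1 -> detaS N K n x = 0.
Proof.
  intros H; induction n; simpl; auto. rewrite IHn, dpsi_out. ring.
  pose proof (pos_INR n); lra.
Qed.
Lemma etaS_high N K n x : INR n + 1 <= N * x -> etaS N K n x = sumc K n.
Proof.
  induction n; intros H; simpl; auto. rewrite S_INR in H.
  rewrite IHn by lra. rewrite psi_one by lra. ring.
Qed.
Lemma etaS_at N K n j x : (j <= n)%nat -> N * x = INR j + 1 -> etaS N K n x = sumc K j.
Proof.
  induction n; intros Hj Hx.
  - assert (j = 0%nat) by lia. subst. reflexivity.
  - destruct (Nat.eq_dec j (S n)).
    + subst j. simpl. rewrite S_INR in Hx. rewrite etaS_high by lra. rewrite psi_one by lra. ring.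
    + simpl. rewrite IHn; [|lia|auto]. rewrite psi_zero. ring.
      assert (INR j <= INR n) by (apply le_INR; lia). lra.
Qed.
Lemma detaS_in N K n j x : INR j + 1 <= N * x <= INR j + 2 ->
  detaS N K n x = if lt_dec j n then (- K) ^ j * (N * dpsi (N * x - INR j - 1)) else 0.
Proof.
  intros Hx; induction n; simpl.
  - destruct (lt_dec j 0); [lia|auto].
  - rewrite IHn. destruct (Nat.eq_dec j n).
    + subst. destruct (lt_dec n n); [lia|]. destruct (lt_dec n (S n)); [|lia]. ring.
    + rewrite (dpsi_out (N * x - INR n - 1)).
      destruct (lt_dec j n); destruct (lt_dec j (S n)); try lia; ring.
      destruct (lt_dec j n).
      * left. assert (INR j + 1 <= INR n) by (rewrite <- S_INR; apply le_INR; lia). lra.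
      * right. assert (INR n + 1 <= INR j) by (rewrite <- S_INR; apply le_INR; lia). lra.
Qed.

Lemma detaS_bound N K n x B : 0 <= N -> (forall t, dpsi t <= B) ->
  Rabs (detaS N K n x) <= N * B * sumac K n.
Proof.
  intros HN HB. induction n; simpl. rewrite Rabs_R0; lra.
  eapply Rle_trans. apply Rabs_triang.
  rewrite Rabs_mult, Rabs_mult, (Rabs_right N), (Rabs_right (dpsi _)) by (apply Rle_ge; auto using dpsi_ge0).
  pose proof (HB (N * x - INR n - 1)). pose proof (dpsi_ge0 (N * x - INR n - 1)).
  pose proof (Rabs_pos ((-K)^n)).
  assert (Rabs ((- K) ^ n) * (N * dpsi (N * x - INR n - 1)) <= N * B * Rabs ((- K) ^ n)).
  { replace (N * B * Rabs ((- K) ^ n)) with (Rabs ((- K) ^ n) * (N * B)) by ring.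
    apply Rmult_le_compat_l; auto. apply Rmult_le_compat_l; auto. }
  lra.
Qed.

Lemma Rabs_sub_le a b : Rabs (a - b) <= Rabs a + Rabs b.
Proof. unfold Rminus; rewrite <- (Rabs_Ropp b); apply Rabs_triang. Qed.

Definition eta N K k x := etaS N K (S k) x - sumc K (S k) * psi (N * x - INR (S k) - 1).
Definition deta N K k x := detaS N K (S k) x - sumc K (S k) * (N * dpsi (N * x - INR (S k) - 1)).

Lemma eta_der N K k (x : R) : is_derive (eta N K k) x (deta N K k x).
Proof.
  unfold eta, deta. eapply isd_val. apply isd_plus. apply etaS_der.
  apply isd_opp. apply isd_mult. apply isd_const.
  apply (isd_comp psi (fun x => N * x - INR (S k) - 1)). apply psi_der.
  auto_derive; auto. simpl; ring.
Qed.
Lemma eta_Cn N K k m : Cn m (eta N K k).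
Proof.
  unfold eta. apply (Cn_ext m (fun x => etaS N K (S k) x + (- sumc K (S k)) * psi ((- INR (S k) - 1) + N * x))).
  intros; replace (- INR (S k) - 1 + N * x) with (N * x - INR (S k) - 1) by ring; ring.
  apply Cn_plus. apply etaS_Cn. apply Cn_mult. apply Cn_const. apply Cn_comp. apply psi_Cn. apply Cn_lin.
Qed.
Lemma eta_low N K k x : N * x <= 1 -> eta N K k x = 0.
Proof.
  intros; unfold eta; rewrite etaS_low, psi_zero by (auto; rewrite S_INR; pose proof (pos_INR k); lra). ring.
Qed.
Lemma deta_low N K k x : N * x <= 1 -> deta N K k x = 0.
Proof.
  intros; unfold deta; rewrite detaS_low, dpsi_out by (auto; left; rewrite S_INR; pose proof (pos_INR k); lra). ring.
Qed.
Lemma eta_high N K k x : INR k + 3 <= N * x -> eta N K k x = 0.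
Proof.
  intros; unfold eta. rewrite etaS_high, psi_one by (rewrite S_INR; lra). ring.
Qed.
Lemma eta_at N K k j x : (j <= S k)%nat -> N * x = INR j + 1 -> eta N K k x = sumc K j.
Proof.
  intros Hj Hx; unfold eta. rewrite (etaS_at N K (S k) j x Hj Hx).
  rewrite psi_zero. ring. assert (INR j <= INR (S k)) by (apply le_INR; lia). lra.
Qed.
Lemma deta_in N K k j x : (j <= k)%nat -> INR j + 1 <= N * x <= INR j + 2 ->
  deta N K k x = (- K) ^ j * (N * dpsi (N * x - INR j - 1)).
Proof.
  intros Hj Hx; unfold deta. rewrite (detaS_in N K (S k) j x Hx).
  destruct (lt_dec j (S k)); [|lia]. rewrite (dpsi_out (N * x - INR (S k) - 1)). ring.
  left. assert (INR j <= INR k) by (apply le_INR; lia). rewrite S_INR. lra.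
Qed.
Lemma deta_bound N K k x B : 0 <= N -> (forall t, dpsi t <= B) ->
  Rabs (deta N K k x) <= N * B * (sumac K (S k) + Rabs (sumc K (S k))).
Proof.
  intros HN HB. unfold deta. eapply Rle_trans. apply Rabs_sub_le.
  pose proof (detaS_bound N K (S k) x B HN HB).
  rewrite Rabs_mult, Rabs_mult, (Rabs_right N), (Rabs_right (dpsi _)) by (apply Rle_ge; auto using dpsi_ge0).
  pose proof (HB (N * x - INR (S k) - 1)). pose proof (dpsi_ge0 (N * x - INR (S k) - 1)).
  pose proof (Rabs_pos (sumc K (S k))).
  assert (Rabs (sumc K (S k)) * (N * dpsi (N * x - INR (S k) - 1)) <= N * B * Rabs (sumc K (S k))).
  { replace (N * B * Rabs (sumc K (S k))) with (Rabs (sumc K (S k)) * (N * B)) by ring.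
    apply Rmult_le_compat_l; auto. apply Rmult_le_compat_l; auto. }
  lra.
Qed.

Definition NN (k : nat) := INR k + 4.
Definition rho K k eps x := x + eps * eta (NN k) K k x.
Definition drho K k eps x := 1 + eps * deta (NN k) K k x.
Definition phiF K k eps x := phi0 (rho K k eps x).
Definition dphiF K k eps x := dphi0 (rho K k eps x) * drho K k eps x.
Definition Hyp K k eps := 0 < eps /\ forall x, eps * Rabs (deta (NN k) K k x) <= 1/2.

Lemma NN_pos k : 4 <= NN k.
Proof. unfold NN; pose proof (pos_INR k); lra. Qed.

Lemma drho_bounds K k eps x : Hyp K k eps -> 1/2 <= drho K k eps x <= 3/2.
Proof.
  intros [He Hb]. unfold drho. specialize (Hb x).
  pose proof (Rle_abs (deta (NN k) K k x)).
  pose proof (Rle_abs (- deta (NN k) K k x)). rewrite Rabs_Ropp in H0.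
  split; nra.
Qed.

Lemma rho_der K k eps (x : R) : is_derive (rho K k eps) x (drho K k eps x).
Proof.
  unfold rho, drho. eapply isd_val. apply isd_plus. apply isd_id.
  apply isd_mult. apply isd_const. apply eta_der. cbv beta; ring.
Qed.

Lemma rho_Cn K k eps n : Cn n (rho K k eps).
Proof. unfold rho. apply Cn_plus. apply Cn_id. apply Cn_mult. apply Cn_const. apply eta_Cn. Qed.

Lemma rho_low K k eps x : NN k * x <= 1 -> rho K k eps x = x.
Proof. intros; unfold rho; rewrite eta_low by auto; ring. Qed.
Lemma rho_high K k eps x : INR k + 3 <= NN k * x -> rho K k eps x = x.
Proof. intros; unfold rho; rewrite eta_high by auto; ring. Qed.
Lemma drho_low K k eps x : NN k * x <= 1 -> drho K k eps x = 1.
Proof. intros; unfold drho; rewrite deta_low by auto; ring. Qed.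

Lemma rho_mono K k eps a b : Hyp K k eps -> a <= b -> rho K k eps a <= rho K k eps b.
Proof.
  intros Hh Hab. apply (mono_le _ (drho K k eps)); auto.
  intros; apply rho_der. intros; pose proof (drho_bounds K k eps x Hh); lra.
Qed.

Lemma rho_mid K k eps x : Hyp K k eps -> 1 <= NN k * x <= INR k + 3 ->
  1 <= NN k * rho K k eps x <= INR k + 3.
Proof.
  intros Hh Hx. pose proof (NN_pos k).
  assert (E1 : NN k * (1 / NN k) = 1) by (field; lra).
  assert (E2 : NN k * ((INR k + 3) / NN k) = INR k + 3) by (field; lra).
  assert (H0 : rho K k eps (1 / NN k) <= rho K k eps x).
  { apply rho_mono; auto. apply (Rmult_le_reg_l (NN k)); [lra|]. lra. }
  assert (H1 : rho K k eps x <= rho K k eps ((INR k + 3) / NN k)).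
  { apply rho_mono; auto. apply (Rmult_le_reg_l (NN k)); [lra|]. lra. }
  rewrite rho_low in H0 by (rewrite E1; lra).
  rewrite (rho_high K k eps ((INR k + 3) / NN k)) in H1 by (rewrite E2; lra).
  split.
  - apply (Rmult_le_compat_l (NN k)) in H0; lra.
  - apply (Rmult_le_compat_l (NN k)) in H1; lra.
Qed.

Lemma NN_bounds k : INR k + 3 <= NN k - 1.
Proof. unfold NN; lra. Qed.

Lemma rho_case K k eps x : Hyp K k eps ->
  (rho K k eps x = x) \/ (1 <= NN k * x <= INR k + 3 /\ 1 <= NN k * rho K k eps x <= INR k + 3).
Proof.
  intros Hh. destruct (Rle_dec (NN k * x) 1). left; now apply rho_low.
  destruct (Rle_dec (INR k + 3) (NN k * x)). left; now apply rho_high.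
  right. split. lra. apply rho_mid; auto; lra.
Qed.

Lemma rho_m11 K k eps x : Hyp K k eps -> -1 < x < 1 -> -1 < rho K k eps x < 1.
Proof.
  intros Hh Hx. pose proof (NN_pos k). pose proof (NN_bounds k).
  destruct (rho_case K k eps x Hh) as [->|[_ H2]]. auto.
  split; [apply (Rmult_lt_reg_l (NN k)); lra|apply (Rmult_lt_reg_l (NN k)); lra].
Qed.
Lemma rho_01 K k eps x : Hyp K k eps -> 0 < x < 1 -> 0 < rho K k eps x < 1.
Proof.
  intros Hh Hx. pose proof (NN_pos k). pose proof (NN_bounds k).
  destruct (rho_case K k eps x Hh) as [->|[_ H2]]. auto.
  split; [apply (Rmult_lt_reg_l (NN k)); lra|apply (Rmult_lt_reg_l (NN k)); lra].
Qed.
Lemma rho_nonneg K k eps x : Hyp K k eps -> 0 <= x -> 0 <= rho K k eps x.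
Proof.
  intros Hh Hx. pose proof (NN_pos k).
  destruct (rho_case K k eps x Hh) as [->|[_ H2]]. auto.
  apply (Rmult_le_reg_l (NN k)); lra.
Qed.
Lemma rho_neg K k eps x : x <= 0 -> rho K k eps x = x.
Proof. intros; apply rho_low. pose proof (NN_pos k); nra. Qed.
Lemma drho_neg K k eps x : x <= 0 -> drho K k eps x = 1.
Proof. intros; apply drho_low. pose proof (NN_pos k); nra. Qed.

Lemma phiF_der K k eps (x : R) : is_derive (phiF K k eps) x (dphiF K k eps x).
Proof.
  unfold phiF, dphiF. eapply isd_val. apply (isd_comp phi0 (rho K k eps)).
  apply phi0_der. apply rho_der. cbv beta; ring.
Qed.
Lemma Derive_phiF K k eps : Derive (phiF K k eps) = dphiF K k eps.
Proof. apply functional_extensionality; intros; apply is_derive_unique, phiF_der. Qed.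
Lemma phiF_Cn K k eps n : Cn n (phiF K k eps).
Proof. unfold phiF. apply Cn_comp. apply phi0_Cn. apply rho_Cn. Qed.

Lemma phiF_mono K k eps : Hyp K k eps -> monotonic_transition (phiF K k eps).
Proof.
  intros Hh. split; [split; [|split]|].
  - apply Cn_smooth. intros; apply phiF_Cn.
  - intros t Ht. unfold phiF. rewrite rho_neg by lra. now apply phi0_m1.
  - intros t Ht. unfold phiF. rewrite rho_high. now apply phi0_p1.
    pose proof (NN_bounds k). pose proof (NN_pos k). nra.
  - intros t Ht. rewrite Derive_phiF. unfold dphiF.
    apply Rmult_lt_0_compat. apply dphi0_pos. now apply rho_m11.
    pose proof (drho_bounds K k eps t Hh); lra.
Qed.

Lemma phiF_0 K k eps : phiF K k eps 0 = 0.
Proof. unfold phiF. rewrite rho_neg by lra. apply phi0_0. Qed.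
Lemma dphiF_0 K k eps : 0 < Derive (phiF K k eps) 0.
Proof.
  rewrite Derive_phiF. unfold dphiF. rewrite rho_neg, drho_neg by lra.
  rewrite Rmult_1_r. apply dphi0_pos; lra.
Qed.

Lemma phiF_L K k eps : Hyp K k eps -> is_L (phiF K k eps) (fun x => - rho K k eps x).
Proof.
  intros Hh x Hx. pose proof (rho_01 K k eps x Hh Hx). split. lra.
  unfold phiF. rewrite (rho_neg K k eps (- rho K k eps x)) by lra. apply phi0_odd.
Qed.

Lemma phi0_strict a b : -1 <= a -> a < b -> b <= 1 -> phi0 a < phi0 b.
Proof.
  intros. apply (mono_lt phi0 dphi0); auto. apply phi0_der.
  intros; unfold dphi0; apply dpsi_ge0. intros; apply dphi0_pos; lra.
Qed.

Lemma L_unique K k eps L : Hyp K k eps -> is_L (phiF K k eps) L ->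
  forall x, 0 < x < 1 -> L x = - rho K k eps x.
Proof.
  intros Hh HL x Hx. destruct (HL x Hx) as [[H1a H1b] H2].
  destruct (phiF_L K k eps Hh x Hx) as [[H3a H3b] H4].
  rewrite <- H4 in H2. unfold phiF in H2.
  rewrite (rho_neg K k eps (L x)) in H2 by lra.
  rewrite (rho_neg K k eps (- rho K k eps x)) in H2 by lra.
  destruct (Rtotal_order (L x) (- rho K k eps x)) as [Hl|[Hl|Hl]]; auto.
  - pose proof (phi0_strict (L x) (- rho K k eps x) ltac:(lra) Hl ltac:(lra)); lra.
  - pose proof (phi0_strict (- rho K k eps x) (L x) ltac:(lra) Hl ltac:(lra)); lra.
Qed.

Definition gF K k eps s := phiF K k eps s * dphiF K k eps s ^ 2.
Definition HF K k eps := I_fun (phiF K k eps) (fun x => - rho K k eps x).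
Definition HdF K k eps x := 4 * (- drho K k eps x * gF K k eps (- rho K k eps x) - gF K k eps x).

Lemma gF_Cn K k eps n : Cn n (gF K k eps).
Proof.
  unfold gF. apply (Cn_ext n (fun s => phiF K k eps s * (dphiF K k eps s * dphiF K k eps s))).
  intros; ring. apply Cn_mult. apply phiF_Cn.
  rewrite <- Derive_phiF. assert (Cn (S n) (phiF K k eps)) as [_ H] by apply phiF_Cn.
  apply Cn_mult; auto.
Qed.

Lemma gF_cont K k eps x : continuous (gF K k eps) x.
Proof.
  apply (ex_derive_continuous (K:=R_AbsRing) (V:=R_NormedModule)).
  destruct (gF_Cn K k eps 1) as [H _]. apply H.
Qed.

Lemma HF_eq K k eps : HF K k eps = fun x => 4 * RInt (gF K k eps) x (- rho K k eps x).
Proof.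
  unfold HF, I_fun, gF. rewrite Derive_phiF. reflexivity.
Qed.

Lemma HF_der K k eps (x : R) : is_derive (HF K k eps) x (HdF K k eps x).
Proof.
  rewrite HF_eq. unfold HdF. eapply isd_val. apply isd_mult. apply isd_const.
  apply (is_derive_RInt_bound_comp (gF K k eps) (RInt (gF K k eps)) (fun x => x) (fun x => - rho K k eps x) 1 (- drho K k eps x) x).
  - apply filter_forall. intros u. apply (RInt_correct (V:=R_CompleteNormedModule)). apply (ex_RInt_continuous (V:=R_CompleteNormedModule)).
    intros; apply gF_cont.
  - apply gF_cont.
  - apply gF_cont.
  - apply isd_id.
  - apply isd_opp. apply rho_der.
  - cbv beta. unfold minus, plus, opp, scal; simpl. unfold mult; simpl. ring.
Qed.

Lemma HF_0 K k eps : HF K k eps 0 = 0.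
Proof.
  rewrite HF_eq. rewrite rho_neg by lra. replace (- 0) with 0 by ring.
  rewrite RInt_point. unfold zero; simpl. ring.
Qed.

Definition g0 y := phi0 y * dphi0 y ^ 2.
Definition wF K k eps x := g0 (rho K k eps x) * drho K k eps x.

Lemma HdF_formula K k eps x : Hyp K k eps -> 0 <= x ->
  HdF K k eps x = - 4 * eps * (wF K k eps x * deta (NN k) K k x).
Proof.
  intros Hh Hx. pose proof (rho_nonneg K k eps x Hh Hx).
  unfold HdF, gF, wF, g0, phiF, dphiF.
  rewrite (rho_neg K k eps (- rho K k eps x)) by lra.
  rewrite (drho_neg K k eps (- rho K k eps x)) by lra.
  rewrite phi0_odd, dphi0_even. unfold drho. ring.
Qed.

Definition GF K k eps x := HF K k eps x * / (- 4 * eps).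
Definition GdF K k eps x := HdF K k eps x * / (- 4 * eps).

Lemma GF_der K k eps (x : R) : is_derive (GF K k eps) x (GdF K k eps x).
Proof.
  unfold GF, GdF. eapply isd_val. apply isd_mult. apply HF_der. apply isd_const.
  cbv beta; ring.
Qed.

Lemma GdF_formula K k eps x : Hyp K k eps -> 0 <= x ->
  GdF K k eps x = wF K k eps x * deta (NN k) K k x.
Proof.
  intros Hh Hx. unfold GdF. rewrite HdF_formula by auto. destruct Hh as [He _].
  field. lra.
Qed.

Lemma GF_0 K k eps : GF K k eps 0 = 0.
Proof. unfold GF. rewrite HF_0. ring. Qed.

Lemma m1pow_sq j : (-1) ^ j * (-1) ^ j = 1.
Proof. rewrite <- Rpow_mult_distr. replace (-1 * -1) with 1 by ring. apply pow1. Qed.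
Lemma mKpow K j : (- K) ^ j = (-1) ^ j * K ^ j.
Proof. rewrite <- Rpow_mult_distr. f_equal. ring. Qed.

Definition WB K k eps m M := forall x, 1 <= NN k * x <= INR k + 3 -> m <= wF K k eps x <= M.

Lemma GF_P0 K k eps : Hyp K k eps -> GF K k eps (1 / NN k) = 0.
Proof.
  intros Hh. pose proof (NN_pos k).
  assert (Hd : forall x, 0 <= x <= 1 / NN k -> GdF K k eps x = 0).
  { intros x Hx. rewrite GdF_formula by (auto; lra). rewrite deta_low. ring.
    assert (NN k * x <= NN k * (1 / NN k)) by (apply Rmult_le_compat_l; lra).
    replace (NN k * (1 / NN k)) with 1 in H0 by (field; lra). auto. }
  assert (0 <= 1 / NN k) by (apply Rlt_le, Rdiv_lt_0_compat; lra).
  assert (GF K k eps 0 <= GF K k eps (1 / NN k)).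
  { apply (mono_le _ (GdF K k eps)); auto. apply GF_der. intros; rewrite Hd; lra. }
  assert (- GF K k eps 0 <= - GF K k eps (1 / NN k)).
  { apply (mono_le (fun x => - GF K k eps x) (fun x => - GdF K k eps x)); auto.
    intros; apply isd_opp, GF_der. intros; rewrite Hd; lra. }
  rewrite GF_0 in *. lra.
Qed.

Lemma mono_comb f df e de a b P Q : P <= Q -> (forall x, is_derive f x (df x)) ->
  (forall x, is_derive e x (de x)) -> (forall x, P <= x <= Q -> b * de x <= a * df x) ->
  b * (e Q - e P) <= a * (f Q - f P).
Proof.
  intros HPQ Hf He Hx.
  assert (a * f P - b * e P <= a * f Q - b * e Q).
  { apply (mono_le (fun x => a * f x - b * e x) (fun x => a * df x - b * de x)); auto.
    intros x. eapply isd_val. apply isd_plus. apply isd_mult. apply isd_const. apply Hf.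
    apply isd_opp. apply isd_mult. apply isd_const. apply He. cbv beta; ring.
    intros x Hx'. specialize (Hx x Hx'). lra. }
  lra.
Qed.

Lemma interval_bounds K k eps m M j : 0 < K -> Hyp K k eps -> WB K k eps m M -> (j <= k)%nat ->
  m * K ^ j <= (-1) ^ j * (GF K k eps ((INR j + 2) / NN k) - GF K k eps ((INR j + 1) / NN k))
  <= M * K ^ j.
Proof.
  intros HK Hh HW Hj. pose proof (NN_pos k).
  set (P := (INR j + 1) / NN k). set (Q := (INR j + 2) / NN k).
  assert (EP : NN k * P = INR j + 1) by (unfold P; field; lra).
  assert (EQ : NN k * Q = INR (S j) + 1) by (unfold Q; rewrite S_INR; field; lra).
  assert (HPQ : P <= Q). { apply (Rmult_le_reg_l (NN k)); [lra|]. rewrite EP, EQ, S_INR; lra. }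
  assert (HP0 : 0 <= P). { apply (Rmult_le_reg_l (NN k)); [lra|]. rewrite EP, Rmult_0_r. pose proof (pos_INR j); lra. }
  assert (Heta : eta (NN k) K k Q - eta (NN k) K k P = (- K) ^ j).
  { rewrite (eta_at (NN k) K k (S j) Q), (eta_at (NN k) K k j P); auto; try lia. simpl; ring. }
  set (s := (-1) ^ j).
  assert (Hs : s * s = 1) by apply m1pow_sq.
  assert (Hin : forall x, P <= x <= Q ->
     GdF K k eps x = wF K k eps x * (s * (K ^ j * (NN k * dpsi (NN k * x - INR j - 1))))
     /\ deta (NN k) K k x = s * (K ^ j * (NN k * dpsi (NN k * x - INR j - 1)))
     /\ m <= wF K k eps x <= M /\ 0 <= K ^ j * (NN k * dpsi (NN k * x - INR j - 1))).
  { intros x Hx.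
    assert (Nx : INR j + 1 <= NN k * x <= INR j + 2).
    { split. rewrite <- EP; apply Rmult_le_compat_l; lra.
      replace (INR j + 2) with (INR (S j) + 1) by (rewrite S_INR; ring).
      rewrite <- EQ; apply Rmult_le_compat_l; lra. }
    split; [|split; [|split]].
    - rewrite GdF_formula by (auto; lra). rewrite (deta_in (NN k) K k j x Hj Nx).
      unfold s. rewrite mKpow. ring.
    - rewrite (deta_in (NN k) K k j x Hj Nx). unfold s. rewrite mKpow. ring.
    - apply HW. assert (INR j <= INR k) by (apply le_INR; lia). pose proof (pos_INR j). lra.
    - apply Rmult_le_pos. apply pow_le. lra. apply Rmult_le_pos. lra. apply dpsi_ge0. }
  rewrite mKpow in Heta. fold s in Heta.
  split.
  - assert (m * s * (eta (NN k) K k Q - eta (NN k) K k P) <= s * (GF K k eps Q - GF K k eps P)).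
    { apply (mono_comb _ (GdF K k eps) _ (deta (NN k) K k)); auto.
      apply GF_der. apply eta_der.
      intros x Hx. destruct (Hin x Hx) as [H1 [H2 [H3 H4]]]. rewrite H1, H2.
      set (T := K ^ j * (NN k * dpsi (NN k * x - INR j - 1))) in *.
      replace (m * s * (s * T)) with ((s * s) * (m * T)) by ring.
      replace (s * (wF K k eps x * (s * T))) with ((s * s) * (wF K k eps x * T)) by ring.
      rewrite Hs. nra. }
    rewrite Heta in H0. replace (m * s * (s * K ^ j)) with ((s * s) * (m * K ^ j)) in H0 by ring.
    rewrite Hs in H0. lra.
  - assert (s * (GF K k eps Q - GF K k eps P) <= M * s * (eta (NN k) K k Q - eta (NN k) K k P)).
    { apply (mono_comb _ (deta (NN k) K k) _ (GdF K k eps)); auto.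
      apply eta_der. apply GF_der.
      intros x Hx. destruct (Hin x Hx) as [H1 [H2 [H3 H4]]]. rewrite H1, H2.
      set (T := K ^ j * (NN k * dpsi (NN k * x - INR j - 1))) in *.
      replace (M * s * (s * T)) with ((s * s) * (M * T)) by ring.
      replace (s * (wF K k eps x * (s * T))) with ((s * s) * (wF K k eps x * T)) by ring.
      rewrite Hs. nra. }
    rewrite Heta in H0. replace (M * s * (s * K ^ j)) with ((s * s) * (M * K ^ j)) in H0 by ring.
    rewrite Hs in H0. lra.
Qed.

Lemma alternation K k eps m M j : 0 < K -> Hyp K k eps -> WB K k eps m M -> 0 < m -> M < m * K ->
  (j <= k)%nat -> 0 < (-1) ^ j * GF K k eps ((INR j + 2) / NN k) <= M * K ^ j.
Proof.
  intros HK Hh HW Hm HMK. induction j; intros Hj.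
  - pose proof (interval_bounds K k eps m M 0 HK Hh HW Hj).
    simpl in *. replace ((0 + 1) / NN k) with (1 / NN k) in H by (f_equal; ring). rewrite GF_P0 in H by auto. lra.
  - pose proof (interval_bounds K k eps m M (S j) HK Hh HW Hj) as HI.
    specialize (IHj ltac:(lia)).
    replace ((INR (S j) + 1) / NN k) with ((INR j + 2) / NN k) in HI by (rewrite S_INR; f_equal; ring).
    set (A := (-1) ^ j * GF K k eps ((INR j + 2) / NN k)) in *.
    set (GQ := GF K k eps ((INR (S j) + 2) / NN k)) in *.
    set (GP := GF K k eps ((INR j + 2) / NN k)) in *.
    change ((-1) ^ S j) with (-1 * (-1) ^ j) in *.
    change (K ^ S j) with (K * K ^ j) in *.
    assert (0 < K ^ j) by (apply pow_lt; lra).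
    assert (M * K ^ j < m * (K * K ^ j)) by nra.
    assert (-1 * (-1) ^ j * GQ = -1 * (-1) ^ j * (GQ - GP) - A) by (unfold A; ring).
    split; nra.
Qed.

Lemma GF_cont K k eps : continuity (GF K k eps).
Proof. intros x. eapply isd_cont. apply GF_der. Qed.

Lemma sign_opp a b : 0 < (-1) * a * b -> Rmin a b <= 0 <= Rmax a b.
Proof.
  intros H. unfold Rmin, Rmax. destruct (Rle_dec a b); nra.
Qed.

Lemma zero_in K k eps m M L j : 0 < K -> Hyp K k eps -> WB K k eps m M -> 0 < m -> M < m * K ->
  is_L (phiF K k eps) L -> (1 <= j <= k)%nat ->
  exists z, (INR j + 1) / NN k < z < (INR j + 2) / NN k /\ 0 < z < 1 /\
    simple_zero (I_fun (phiF K k eps) L) z.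
Proof.
  intros HK Hh HW Hm HMK HL Hj. pose proof (NN_pos k).
  destruct j as [|j]; [lia|].
  pose proof (alternation K k eps m M j HK Hh HW Hm HMK ltac:(lia)) as A1.
  pose proof (alternation K k eps m M (S j) HK Hh HW Hm HMK ltac:(lia)) as A2.
  set (P := (INR (S j) + 1) / NN k). set (Q := (INR (S j) + 2) / NN k).
  replace ((INR j + 2) / NN k) with P in A1 by (unfold P; rewrite S_INR; f_equal; ring).
  fold Q in A2. change ((-1) ^ S j) with (-1 * (-1) ^ j) in A2.
  assert (Hs := m1pow_sq j).
  assert (Hprod : 0 < (-1) * GF K k eps P * GF K k eps Q).
  { assert (0 < ((-1) ^ j * GF K k eps P) * (-1 * (-1) ^ j * GF K k eps Q)) by nra.
    replace (((-1) ^ j * GF K k eps P) * (-1 * (-1) ^ j * GF K k eps Q)) with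
      (((-1) ^ j * (-1) ^ j) * ((-1) * GF K k eps P * GF K k eps Q)) in H0 by ring.
    rewrite Hs in H0. lra. }
  assert (HPQ : P < Q) by (unfold P, Q; apply Rmult_lt_compat_r; [apply Rinv_0_lt_compat; lra|lra]).
  destruct (IVT_gen (GF K k eps) P Q 0 (GF_cont K k eps) (sign_opp _ _ Hprod)) as [z [Hz Gz]].
  rewrite Rmin_left, Rmax_right in Hz by lra.
  assert (HzP : z <> P) by (intros ->; nra).
  assert (HzQ : z <> Q) by (intros ->; nra).
  assert (EP : NN k * P = INR (S j) + 1) by (unfold P; field; lra).
  assert (EQ : NN k * Q = INR (S j) + 2) by (unfold Q; field; lra).
  assert (Nz : INR (S j) + 1 < NN k * z < INR (S j) + 2).
  { split. rewrite <- EP; apply Rmult_lt_compat_l; lra. rewrite <- EQ; apply Rmult_lt_compat_l; lra. }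
  assert (Hjk : INR (S j) <= INR k) by (apply le_INR; lia).
  assert (Hz01 : 0 < z < 1).
  { pose proof (pos_INR (S j)). unfold NN in *. split; nra. }
  exists z. split; [lra|]. split; auto.
  assert (Hloc : locally z (fun t => HF K k eps t = I_fun (phiF K k eps) L t)).
  { assert (Hr : 0 < Rmin z (1 - z)) by (apply Rmin_pos; lra).
    exists (mkposreal _ Hr). intros t Ht.
    unfold ball in Ht; simpl in Ht; unfold AbsRing_ball, abs, minus, plus, opp in Ht; simpl in Ht.
    apply Rabs_def2 in Ht. destruct Ht as [Ht1 Ht2].
    pose proof (Rmin_l z (1 - z)). pose proof (Rmin_r z (1 - z)).
    unfold HF, I_fun. rewrite (L_unique K k eps L Hh HL t) by lra. reflexivity. }
  assert (HFz : HF K k eps z = 0).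
  { unfold GF in Gz. destruct Hh as [He _].
    apply (Rmult_eq_reg_r (/ (-4 * eps))). rewrite Gz; ring.
    apply Rinv_neq_0_compat; lra. }
  split; [|split].
  - rewrite <- (locally_singleton _ _ Hloc). auto.
  - eapply ex_derive_ext_loc. exact Hloc. eexists. apply HF_der.
  - rewrite <- (Derive_ext_loc _ _ _ Hloc). rewrite (is_derive_unique _ _ _ (HF_der K k eps z)).
    rewrite HdF_formula by (auto; lra).
    assert (Nz' : INR (S j) + 1 <= NN k * z <= INR (S j) + 2) by lra.
    rewrite (deta_in (NN k) K k (S j) z ltac:(lia) Nz').
    assert (0 < dpsi (NN k * z - INR (S j) - 1)) by (apply dpsi_pos; lra).
    assert (m <= wF K k eps z) by (apply HW; pose proof (pos_INR (S j)); lra).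
    assert (0 < K ^ S j) by (apply pow_lt; lra).
    assert ((- K) ^ S j <> 0) by (apply pow_nonzero; lra).
    destruct Hh as [He _].
    intros Habs. apply Rmult_integral in Habs as [Habs|Habs]; [lra|].
    apply Rmult_integral in Habs as [Habs|Habs]; [lra|].
    apply Rmult_integral in Habs as [Habs|Habs]; [auto|nra].
Qed.

Lemma Derive_phi0 : Derive phi0 = dphi0.
Proof. apply functional_extensionality; intros; apply is_derive_unique, phi0_der. Qed.

Lemma g0_cont x : continuity_pt g0 x.
Proof.
  apply Cn1_cont. unfold g0.
  apply (Cn_ext 1 (fun y => phi0 y * (Derive phi0 y * Derive phi0 y))).
  intros; rewrite Derive_phi0; ring.
  apply Cn_mult. apply phi0_Cn. destruct (phi0_Cn 2) as [_ H]. apply Cn_mult; auto.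
Qed.

Lemma g0_pos y : 0 < y < 1 -> 0 < g0 y.
Proof.
  intros Hy. unfold g0. pose proof (phi0_strict 0 y ltac:(lra) ltac:(lra) ltac:(lra)).
  rewrite phi0_0 in H. pose proof (dphi0_pos y ltac:(lra)).
  apply Rmult_lt_0_compat; auto. apply pow_lt; auto.
Qed.

Lemma sumac_ge0 K n : 0 <= sumac K n.
Proof. induction n; simpl. lra. pose proof (Rabs_pos ((-K)^n)); lra. Qed.

Lemma zeros_list K k eps m M L : 0 < K -> Hyp K k eps -> WB K k eps m M -> 0 < m -> M < m * K ->
  is_L (phiF K k eps) L -> forall n, (n <= k)%nat ->
  exists xs : list R, length xs = n /\ NoDup xs /\
    List.Forall (fun x => ((0 < x < 1) /\ simple_zero (I_fun (phiF K k eps) L) x) /\ x < (INR n + 2) / NN k) xs.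
Proof.
  intros HK Hh HW Hm HMK HL. pose proof (NN_pos k). induction n; intros Hn.
  - exists nil. split; auto. split; constructor.
  - destruct (IHn ltac:(lia)) as [xs [Hl [Hd Hf]]].
    destruct (zero_in K k eps m M L (S n) HK Hh HW Hm HMK HL ltac:(lia)) as [z [Hz [Hz1 Hz2]]].
    rewrite S_INR in Hz.
    exists (z :: xs). split; [simpl; auto|]. split.
    + constructor; auto. intros Hin. rewrite List.Forall_forall in Hf.
      destruct (Hf z Hin) as [_ Hlt].
      replace (INR n + 1 + 1) with (INR n + 2) in Hz by ring. lra.
    + constructor.
      * split; auto. rewrite S_INR. lra.
      * eapply List.Forall_impl; [|exact Hf]. intros x [Hx1 Hx2]. split; auto.
        rewrite S_INR. apply (Rlt_le_trans _ _ _ Hx2).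
        apply Rmult_le_compat_r. apply Rlt_le, Rinv_0_lt_compat; lra. lra.
Qed.

Theorem mainTheorem5 :
  forall k : nat, (0 < k)%nat ->
  exists phi : R -> R,
    monotonic_transition phi /\ phi 0 = 0 /\ 0 < Derive phi 0 /\
    (exists L : R -> R, is_L phi L) /\
    forall L : R -> R, is_L phi L ->
      exists xs : list R,
        length xs = k /\ NoDup xs /\
        List.Forall (fun x : R => (0 < x < 1) /\ simple_zero (I_fun phi L) x) xs.
Proof.
  intros k Hk. pose proof (NN_pos k) as HN.
  set (a0 := 1 / NN k). set (b0 := (INR k + 3) / NN k).
  assert (Ha0 : NN k * a0 = 1) by (unfold a0; field; lra).
  assert (Hb0 : NN k * b0 = INR k + 3) by (unfold b0; field; lra).
  assert (Hab : a0 <= b0) by (apply (Rmult_le_reg_l (NN k)); [lra|]; rewrite Ha0, Hb0; pose proof (pos_INR k); lra).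
  assert (Ha0p : 0 < a0) by (unfold a0; apply Rdiv_lt_0_compat; lra).
  assert (Hb01 : b0 < 1) by (apply (Rmult_lt_reg_l (NN k)); [lra|]; rewrite Hb0; unfold NN; lra).
  destruct (continuity_ab_min g0 a0 b0 Hab (fun c _ => g0_cont c)) as [xm [Hmin Hxm]].
  destruct (continuity_ab_maj g0 a0 b0 Hab (fun c _ => g0_cont c)) as [xM [Hmax HxM]].
  set (m0 := g0 xm). set (M0 := g0 xM).
  assert (Hm0 : 0 < m0) by (apply g0_pos; lra).
  assert (HmM : m0 <= M0) by (unfold m0, M0; apply Hmin; lra).
  set (K := 3 * M0 / m0 + 1).
  assert (HK : 0 < K). { unfold K. assert (0 <= 3 * M0 / m0) by (apply Rmult_le_pos; [lra|apply Rlt_le, Rinv_0_lt_compat; lra]). lra. }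
  assert (HMK : 3 * M0 / 2 < m0 / 2 * K). { unfold K. field_simplify; [|lra]. lra. }
  destruct (continuity_ab_maj dpsi 0 1 ltac:(lra) (fun c _ => dpsi_cont c)) as [Bx [HB HBx]].
  set (B := dpsi Bx).
  assert (HBall : forall t, dpsi t <= B).
  { intros t. destruct (Rle_dec t 0); [|destruct (Rle_dec 1 t)].
    rewrite dpsi_out by lra. apply dpsi_ge0.
    rewrite dpsi_out by lra. apply dpsi_ge0. apply HB; lra. }
  assert (HB0 : 0 <= B) by (unfold B; apply dpsi_ge0).
  set (Dm := NN k * B * (sumac K (S k) + Rabs (sumc K (S k)))).
  assert (HDm : 0 <= Dm).
  { unfold Dm. apply Rmult_le_pos. apply Rmult_le_pos; lra.
    pose proof (sumac_ge0 K (S k)); pose proof (Rabs_pos (sumc K (S k))); lra. }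
  set (eps := 1 / (2 * (Dm + 1))).
  assert (Heps : 0 < eps) by (unfold eps; apply Rdiv_lt_0_compat; lra).
  assert (Hh : Hyp K k eps).
  { split; auto. intros x.
    pose proof (deta_bound (NN k) K k x B ltac:(lra) HBall). fold Dm in H.
    apply Rle_trans with (eps * Dm). apply Rmult_le_compat_l; lra.
    unfold eps. apply (Rmult_le_reg_r (2 * (Dm + 1))); [lra|].
    field_simplify; lra. }
  assert (HW : WB K k eps (m0 / 2) (3 * M0 / 2)).
  { intros x Hx. pose proof (rho_mid K k eps x Hh Hx) as Hr.
    assert (a0 <= rho K k eps x <= b0).
    { split; apply (Rmult_le_reg_l (NN k)); lra. }
    pose proof (Hmin _ H) as Hg1. pose proof (Hmax _ H) as Hg2. change (g0 xm) with m0 in Hg1. change (g0 xM) with M0 in Hg2.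
    pose proof (drho_bounds K k eps x Hh) as Hd. unfold wF.
    set (gg := g0 (rho K k eps x)) in *. set (dd := drho K k eps x) in *.
    split.
    - assert (0 <= (gg - m0) * dd) by (apply Rmult_le_pos; lra).
      assert (0 <= m0 * (dd - 1/2)) by (apply Rmult_le_pos; lra). lra.
    - assert (0 <= (M0 - gg) * dd) by (apply Rmult_le_pos; lra).
      assert (0 <= M0 * (3/2 - dd)) by (apply Rmult_le_pos; lra). lra. }
  exists (phiF K k eps). split; [|split; [|split; [|split]]].
  - now apply phiF_mono.
  - apply phiF_0.
  - apply dphiF_0.
  - eexists. now apply phiF_L.
  - intros L HL.
    destruct (zeros_list K k eps (m0 / 2) (3 * M0 / 2) L HK Hh HW ltac:(lra) HMK HL k (le_n k))
      as [xs [H1 [H2 H3]]].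
    exists xs. split; auto. split; auto.
    eapply List.Forall_impl; [|exact H3]. intros x [Hx _]. exact Hx.
Qed.
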